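(* Let $N$ be a finite set with $|N|\ge2$. Under the correspondence between SE faces of $P_N$ and faces of $C_N$ (the SE face $\{\eta\in P_N:\langle o,\eta\rangle=u\}$ with $o$ an SE objective and $\langle o,\eta\rangle\le u$ valid on $P_N$ corresponds to the face $\{c\in C_N:\langle\tau_o,c\rangle=u\}$), the SE facets of $P_N$ correspond exactly to those facets of $C_N$ that contain the 1-imset (the all-ones vector in $\mathbb{R}^{\mathcal{S}}$). None of these facets of $C_N$ contains the 0-imset (the zero vector in $\mathbb{R}^{\mathcal{S}}$).
   Context: $\mathrm{DAG}(N)$ is the set of acyclic directed graphs over $N$; $\mathrm{pa}_G(a)$ is the parent set of $a$ in $G$; $G\sim H$ (Markov equivalence) means same adjacencies and same immoralities. $\Upsilon=\{(a|B): a\in N,\ \emptyset\neq B\subseteq N\setminus\{a\}\}$; $\eta_G\in\mathbb{R}^{\Upsilon}$ has $\eta_G(a|B)=1$ if $B=\mathrm{pa}_G(a)$, else $0$; $P_N=\mathrm{conv}\{\eta_G:G\in\mathrm{DAG}(N)\}$. $\mathcal{S}=\{S\subseteq N:|S|\ge2\}$; $c_\eta(S)=\sum_{a\in S}\sum_{B:\,S\setminus\{a\}\subseteq B\subseteq N\setminus\{a\}}\eta(a|B)$; $c_G=c_{\eta_G}$; $C_N=\mathrm{conv}\{c_G:G\in\mathrm{DAG}(N)\}$. (The 1-imset is $c_H$ for any full graph $H$, the 0-imset is $c_G$ for the empty graph.) $o$ is an SE objective if $\langle o,\eta_G\rangle=\langle o,\eta_H\rangle$ whenever $G\sim H$; an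 SE face/facet of $P_N$ is a face/facet of the form $\{v\in P_N:\langle o,v\rangle=u\}$ with $o$ SE and $\langle o,v\rangle\le u$ valid on $P_N$. For SE $o$, $\tau_o(T)=\sum_{\emptyset\neq K\subseteq T\setminus\{b\}}(-1)^{|T\setminus\{b\}|-|K|}o(b|K)$ for any $b\in T$ (independent of $b$), with $o(b|\emptyset)=0$; then $\langle o,\eta\rangle=\langle\tau_o,c_\eta\rangle$ for all $\eta$. *)

(* Defs.v *)
From HB Require Import structures.
From mathcomp Require Import all_boot all_order all_algebra.
Set Implicit Arguments. Unset Strict Implicit. Unset Printing Implicit Defensive.
Import Order.TTheory GRing.Theory Num.Theory.
Local Open Scope ring_scope.

Section Defs.
Variable R : realFieldType.
Variable N : finType.

Definition Ups := {p : N * {set N} | (p.1 \notin p.2) && (p.2 != set0)}.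
HB.instance Definition _ := Finite.on Ups.
Definition Sset := {S : {set N} | (1 < #|S|)%N}.
HB.instance Definition _ := Finite.on Sset.

(* Evaluate a vector on Upsilon at (a|B); value 0 outside Upsilon
   (in particular o(b|emptyset) = 0). *)
Definition ev (o : Ups -> R) (a : N) (B : {set N}) : R :=
  if @insub _ (fun p : N * {set N} => (p.1 \notin p.2) && (p.2 != set0)) Ups (a, B)
  is Some x then o x else 0.

(* A directed graph over N is given by its parent-set function pa. *)
Definition dgraph := {ffun N -> {set N}}.
Definition edge (G : dgraph) : rel N := fun x y => x \in G y.
Definition is_dag (G : dgraph) : bool :=
  [forall x, forall y, edge G x y ==> ~~ connect (edge G) y x].

Definition adj (G : dgraph) (a b : N) : bool := (a \in G b) || (b \in G a).
Definition immor (G : dgraph) (a c b : N) : bool :=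
  [&& a \in G c, b \in G c, a != b & ~~ adj G a b].
Definition markov_equiv (G H : dgraph) : Prop :=
  (forall a b, adj G a b = adj H a b) /\
  (forall a c b, immor G a c b = immor H a c b).

Definition eta (G : dgraph) : Ups -> R :=
  fun i => ((G (val i).1 == (val i).2) : nat)%:R.

Definition dot (I : finType) (o v : I -> R) : R := \sum_i o i * v i.

Definition conv_fam (I J : finType) (P : pred J) (f : J -> I -> R) : (I -> R) -> Prop :=
  fun x => exists lam : J -> R,
    [/\ forall j, 0 <= lam j, forall j, ~~ P j -> lam j = 0,
        \sum_j lam j = 1 & forall i, x i = \sum_j lam j * f j i].

Definition PN : (Ups -> R) -> Prop := conv_fam is_dag eta.

Definition cvec (e : Ups -> R) : Sset -> R :=
  fun S => \sum_(a in val S)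
             \sum_(B : {set N} | (val S :\ a \subset B) && (a \notin B)) ev e a B.

Definition CN : (Sset -> R) -> Prop := conv_fam is_dag (fun G => cvec (eta G)).

Definition SE (o : Ups -> R) : Prop :=
  forall G H, is_dag G -> is_dag H -> markov_equiv G H -> dot o (eta G) = dot o (eta H).

(* tau_o(T), computed with a chosen b in T (T is nonempty since |T| >= 2). *)
Definition tau (o : Ups -> R) : Sset -> R :=
  fun T => if [pick b in val T] is Some b then
     \sum_(K : {set N} | (K \subset val T :\ b) && (K != set0))
        (-1) ^+ (#|val T :\ b| - #|K|)%N * ev o b K
   else 0.

Definition one_imset : Sset -> R := fun _ => 1.
Definition zero_imset : Sset -> R := fun _ => 0.
End Defs.

Section Poly.
Variable R : realFieldType.
Variable I : finType.

Definition valid (P : (I -> R) -> Prop) (o : I -> R) (u : R) : Prop :=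
  forall v, P v -> dot o v <= u.

Definition face_of (P : (I -> R) -> Prop) (o : I -> R) (u : R) : (I -> R) -> Prop :=
  fun v => P v /\ dot o v = u.

Definition is_face (P F : (I -> R) -> Prop) : Prop :=
  exists o u, valid P o u /\ forall v, F v <-> face_of P o u v.

Definition aff_indep (k : nat) (x : 'I_k.+1 -> I -> R) : Prop :=
  forall lam : 'I_k.+1 -> R, \sum_j lam j = 0 ->
    (forall i, \sum_j lam j * x j i = 0) -> forall j, lam j = 0.

Definition dim_ge (X : (I -> R) -> Prop) (k : nat) : Prop :=
  exists x : 'I_k.+1 -> I -> R, (forall j, X (x j)) /\ aff_indep x.

(* A facet: a face F with dim F = dim P - 1. *)
Definition is_facet (P F : (I -> R) -> Prop) : Prop :=
  is_face P F /\ forall k, dim_ge F k <-> dim_ge P k.+1.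
End Poly.

Arguments PN R N : clear implicits.
Arguments CN R N : clear implicits.
Arguments one_imset R N : clear implicits.
Arguments zero_imset R N : clear implicits.

(* Main.v *)
Require Import Defs.
From HB Require Import structures.
From mathcomp Require Import all_boot all_order all_algebra zify ring lra.
Set Implicit Arguments. Unset Strict Implicit. Unset Printing Implicit Defensive.
Import Order.TTheory GRing.Theory Num.Theory.
Local Open Scope ring_scope.
Section LA.
Variable R : realFieldType.
Variable I : finType.

Definition hom (x : I -> R) (t : option I) : R := if t is Some i then x i else 1.
Local Notation n := #|{: option I}|.
Definition hmx k (x : 'I_k -> I -> R) : 'M[R]_(k, n) :=
  \matrix_(j, l) hom (x j) (enum_val l).

Lemma sum_option (F : option I -> R) :
  \sum_(t : option I) F t = F None + \sum_i F (Some i).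
Proof.
rewrite (bigD1 None) //=; congr (_ + _).
rewrite (reindex_omap Some (fun t => t)); last by case.
by apply: eq_bigl => i; rewrite eqxx.
Qed.

Lemma sum_enum (F : option I -> R) :
  \sum_(l < n) F (enum_val l) = \sum_t F t.
Proof. by rewrite -(big_enum_val (A := predT)). Qed.

Lemma hmxE k (x : 'I_k -> I -> R) j t : hmx x j (enum_rank t) = hom (x j) t.
Proof. by rewrite mxE enum_rankK. Qed.

Lemma aff_indep_free k (x : 'I_k.+1 -> I -> R) : aff_indep x <-> row_free (hmx x).
Proof.
split=> [ai | fr].
  apply: inj_row_free => v vM.
  have col t : \sum_j v 0 j * hom (x j) t = 0.
    move/rowP: (vM) => /(_ (enum_rank t)).
    rewrite !mxE => h; rewrite -[X in _ = X]h.
    by apply: eq_bigr => j _; rewrite hmxE.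
  apply/rowP => j; rewrite mxE.
  apply: (ai (fun j => v 0 j)) => [|i].
    by rewrite -[RHS](col None); apply: eq_bigr => l _; rewrite mulr1.
  by rewrite -[RHS](col (Some i)).
move=> lam s0 si j.
pose v : 'rV[R]_k.+1 := \row_j lam j.
have : v *m hmx x = 0.
  apply/rowP => l; rewrite !mxE; case E: (enum_val l) => [i|].
    by rewrite -[RHS](si i); apply: eq_bigr => j' _; rewrite !mxE E.
  by rewrite -[RHS]s0; apply: eq_bigr => j' _; rewrite !mxE E mulr1.
move/eqP; rewrite mulmx_free_eq0 // => /eqP /rowP /(_ j).
by rewrite !mxE.
Qed.

Lemma rowsub_free m m' p (g : 'I_m' -> 'I_m) (A : 'M[R]_(m, p)) :
  injective g -> row_free A -> row_free (rowsub g A).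
Proof.
move=> gi fA; apply: inj_row_free => v.
rewrite rowsubE mulmxA => /eqP; rewrite mulmx_free_eq0 // => /eqP /rowP vS.
apply/rowP => j; have := vS (g j); rewrite !mxE => <-.
rewrite (bigD1 j) //= !mxE eqxx mulr1 big1 ?addr0 // => j' /negbTE nj.
by rewrite !mxE (inj_eq gi) nj mulr0.
Qed.

Lemma dim_ge_mono (X : (I -> R) -> Prop) k j : dim_ge X k -> (j <= k)%N -> dim_ge X j.
Proof.
move=> [x [Xx ai]] jk.
have h : (j.+1 <= k.+1)%N by [].
exists (fun i => x (widen_ord h i)); split => [i|]; first exact: Xx.
apply/aff_indep_free.
have -> : hmx (fun i => x (widen_ord h i)) = rowsub (widen_ord h) (hmx x).
  by apply/matrixP => a b; rewrite !mxE.
apply: rowsub_free; last exact/aff_indep_free.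
by move=> a b /(congr1 val) /= /val_inj.
Qed.

Lemma dim_ge_sub (X Y : (I -> R) -> Prop) k : (forall x, X x -> Y x) -> dim_ge X k -> dim_ge Y k.
Proof. by move=> XY [x [Xx ai]]; exists x; split => // j; apply: XY. Qed.

Lemma dim_ge_le (X : (I -> R) -> Prop) k : dim_ge X k -> (k <= #|I|)%N.
Proof.
move=> [x [_ /aff_indep_free fr]].
by have := rank_leq_col (hmx x); rewrite (eqP fr) card_option.
Qed.

Definition cw (w : option I -> R) : 'cV[R]_n := \col_l w (enum_val l).

Lemma hmx_cw k (x : 'I_k -> I -> R) w j :
  (hmx x *m cw w) j 0 = \sum_t hom (x j) t * w t.
Proof. by rewrite mxE -sum_enum; apply: eq_bigr => l _; rewrite !mxE. Qed.

Lemma cw_ker p (M : 'M[R]_(p, n)) w : M *m cw w = 0 -> ((cw w)^T <= kermx M^T)%MS.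
Proof. by move=> h; apply/sub_kermxP; rewrite -trmx_mul h trmx0. Qed.

Definition whom (o : I -> R) (u : R) (t : option I) : R :=
  if t is Some i then o i else - u.

Lemma hom_whom (x o : I -> R) u :
  \sum_t hom x t * whom o u t = \sum_i o i * x i - u.
Proof.
rewrite sum_option /= mul1r addrC; congr (_ - _).
by apply: eq_bigr => i _; rewrite mulrC.
Qed.

Lemma cw_inj w1 w2 : cw w1 = cw w2 -> w1 =1 w2.
Proof.
move=> /colP h t; have := h (enum_rank t); by rewrite !mxE enum_rankK.
Qed.

Lemma ann_full (X : (I -> R) -> Prop) o u :
  dim_ge X #|I| -> (forall x, X x -> dot o x = u) -> forall i, o i = 0.
Proof.
move=> [x [Xx /aff_indep_free fr]] ann i.
have M0 : hmx x *m cw (whom o u) = 0.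
  apply/colP => j; rewrite hmx_cw hom_whom mxE.
  by rewrite -(ann _ (Xx j)) /dot subrr.
have := cw_ker M0.
have rk : \rank (kermx (hmx x)^T) = 0%N.
  by rewrite mxrank_ker mxrank_tr (eqP fr) card_option subnn.
move/mxrankS; rewrite rk leqn0 mxrank_eq0 -trmx0 (inj_eq (@trmx_inj _ _ _)).
have -> : (0 : 'cV[R]_n) = cw (fun _ => 0) by apply/colP => l; rewrite !mxE.
by move/eqP/cw_inj/(_ (Some i)).
Qed.

Lemma cw_whomE o u t : whom o u t = (cw (whom o u))^T 0 (enum_rank t).
Proof. by rewrite !mxE enum_rankK. Qed.

Lemma ann_facet (X : (I -> R) -> Prop) k o0 u0 o u i0 :
  dim_ge X k -> k.+1 = #|I| -> o0 i0 != 0 ->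
  (forall x, X x -> dot o0 x = u0) -> (forall x, X x -> dot o x = u) ->
  exists a, (forall i, o i = a * o0 i) /\ u = a * u0.
Proof.
move=> [x [Xx /aff_indep_free fr]] hk nz ann0 ann.
have M0 o' u' : (forall x, X x -> dot o' x = u') -> hmx x *m cw (whom o' u') = 0.
  move=> an; apply/colP => j; rewrite hmx_cw hom_whom mxE.
  by rewrite -(an _ (Xx j)) /dot subrr.
have K0 := cw_ker (M0 _ _ ann0); have K := cw_ker (M0 _ _ ann).
have rk : \rank (kermx (hmx x)^T) = 1%N.
  by rewrite mxrank_ker mxrank_tr (eqP fr) card_option hk subSnn.
have z0 : (cw (whom o0 u0))^T != 0.
  apply/eqP => /rowP /(_ (enum_rank (Some i0))); rewrite !mxE enum_rankK /=.
  by move/eqP; rewrite (negbTE nz).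
have : (kermx (hmx x)^T <= (cw (whom o0 u0))^T)%MS.
  have := mxrank_leqif_sup K0; rewrite rk rank_rV z0 /= => -[_ <-]; exact: eqxx.
move=> Kz; have /sub_rVP [a ha] := submx_trans K Kz.
exists a; split => [i|].
  by transitivity (whom o u (Some i)) => //; rewrite cw_whomE ha !mxE enum_rankK.
have := cw_whomE o u None; rewrite ha !mxE enum_rankK /= => h.
by rewrite -[u]opprK h mulrN opprK.
Qed.

Lemma span_dim (J : finType) (P : pred J) (Y : J -> I -> R) (X : (I -> R) -> Prop)
    (z : 'rV[R]_n) k :
  (forall j, P j -> X (Y j)) ->
  (forall o u, (forall j, P j -> dot o (Y j) = u) -> ((cw (whom o u))^T <= z)%MS) ->
  (k.+1 + \rank z <= n)%N -> dim_ge X k.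
Proof.
move=> XY hyp hk.
pose MY : 'M[R]_(#|J|, n) := \matrix_(j, l)
  if P (enum_val j) then hom (Y (enum_val j)) (enum_val l) else 0.
have Kz : (kermx MY^T <= z)%MS.
  apply/row_subP => r.
  have rK : row r (kermx MY^T) *m MY^T = 0.
    by apply/sub_kermxP; apply: row_sub.
  pose w t := row r (kermx MY^T) 0 (enum_rank t).
  have e : row r (kermx MY^T) = (cw (whom (fun i => w (Some i)) (- w None)))^T.
    apply/rowP => l; rewrite [RHS]mxE [RHS]mxE; case E: (enum_val l) => [i|] /=.
      by rewrite /w -E enum_valK.
    by rewrite opprK /w -E enum_valK.
  have el l : row r (kermx MY^T) 0 l = whom (fun i => w (Some i)) (- w None) (enum_val l).
    by rewrite e !mxE.
  rewrite e; apply: hyp => j Pj.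
  move/rowP: rK => /(_ (enum_rank j)); rewrite [LHS]mxE [RHS]mxE => h.
  apply/eqP; rewrite -subr_eq0 /dot -hom_whom -[X in _ == X]h; apply/eqP.
  rewrite -sum_enum; apply: eq_bigr => l _.
  rewrite el [MY^T _ _]mxE [MY _ _]mxE enum_rankK Pj mulrC //.
have rk := mxrankS Kz; rewrite mxrank_ker mxrank_tr in rk.
have hr : (k.+1 <= \rank MY)%N by lia.
pose g (j : 'I_k.+1) := maxrankfun MY (widen_ord hr j).
have frA : row_free (rowsub g MY).
  have -> : rowsub g MY = rowsub (widen_ord hr) (rowsub (maxrankfun MY) MY).
    by apply/matrixP => a b; rewrite !mxE.
  apply: rowsub_free; last exact: maxrowsub_free.
  by move=> a b /(congr1 val) /= /val_inj.
have Pg j : P (enum_val (g j)).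
  apply/negPn/negP => nP.
  have h0 : row j (rowsub g MY) = 0.
    apply/rowP => l; by rewrite !mxE (negbTE nP).
  move: h0; rewrite rowE => /eqP.
  rewrite mulmx_free_eq0 // => /eqP /matrixP /(_ 0 j).
  by rewrite !mxE !eqxx => /eqP; rewrite oner_eq0.
exists (fun j => Y (enum_val (g j))); split => [j|]; first exact/XY/Pg.
apply/aff_indep_free.
have -> : hmx (fun j => Y (enum_val (g j))) = rowsub g MY.
  by apply/matrixP => a b; rewrite !mxE Pg.
exact: frA.
Qed.
End LA.
Section Comb.
Variable R : realFieldType.
Variable N : finType.
Local Notation Ups := (Ups N).
Local Notation Sset := (Sset N).
Local Notation dgraph := (dgraph N).
Local Notation eta := (@Defs.eta R N).

Definition upsP (p : N * {set N}) : bool := (p.1 \notin p.2) && (p.2 != set0).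

Lemma evE (o : Ups -> R) (a : N) (B : {set N}) :
  ev o a B = \sum_(i : Ups) o i * ((val i == (a, B)) : nat)%:R.
Proof.
rewrite /ev; case: insubP => [i0 _ vi0 | nP].
  rewrite (bigD1 i0) //= vi0 eqxx mulr1 big1 ?addr0 // => i ni.
  by rewrite -vi0 (inj_eq val_inj) (negbTE ni) mulr0.
rewrite big1 // => i _; case: eqP => [e|]; last by rewrite mulr0.
by move: (valP i); rewrite e => h; move: nP; rewrite h.
Qed.

Lemma ev_val (o : Ups -> R) (i : Ups) : ev o (val i).1 (val i).2 = o i.
Proof. by rewrite /ev -surjective_pairing valK. Qed.

Lemma ev_inv (o : Ups -> R) (a : N) (B : {set N}) : ~~ ((a \notin B) && (B != set0)) -> ev o a B = 0.
Proof. by move=> h; rewrite /ev insubN. Qed.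

Lemma ev_set0 (o : Ups -> R) (a : N) : ev o a set0 = 0.
Proof. by rewrite ev_inv // eqxx andbF. Qed.

Lemma ev_in (o : Ups -> R) (a : N) (B : {set N}) : a \in B -> ev o a B = 0.
Proof. by move=> h; rewrite ev_inv // h. Qed.

Lemma ev_ext (o1 o2 : Ups -> R) (a : N) (B : {set N}) : o1 =1 o2 -> ev o1 a B = ev o2 a B.
Proof. by move=> e; rewrite !evE; apply: eq_bigr => i _; rewrite e. Qed.

Lemma ev_sub (o1 o2 : Ups -> R) (a : N) (B : {set N}) : ev (fun i => o1 i - o2 i) a B = ev o1 a B - ev o2 a B.
Proof. by rewrite !evE -sumrB; apply: eq_bigr => i _; rewrite mulrBl. Qed.

Lemma ev_scale (o : Ups -> R) c (a : N) (B : {set N}) : ev (fun i => c * o i) a B = c * ev o a B.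
Proof. by rewrite !evE mulr_sumr; apply: eq_bigr => i _; rewrite mulrA. Qed.

Lemma ev0 (a : N) (B : {set N}) : ev (fun _ : Ups => 0 : R) a B = 0.
Proof. by rewrite evE big1 // => i _; rewrite mul0r. Qed.

Lemma dot_eta (o : Ups -> R) (G : dgraph) : dot o (eta G) = \sum_x ev o x (G x).
Proof.
under [RHS]eq_bigr do rewrite evE.
rewrite exchange_big /dot; apply: eq_bigr => i _.
rewrite -mulr_sumr; congr (_ * _).
rewrite (bigD1 (val i).1) //= big1 ?addr0.
  rewrite /Defs.eta /=; move: (sval i) => [a B] /=.
  by rewrite xpair_eqE eqxx /= eq_sym.
move=> x nx; case: eqP => // e; move: nx; by rewrite e /= eqxx.
Qed.

Lemma natr_b (b : bool) : ((b : nat)%:R : R) = if b then 1 else 0.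
Proof. by case: b. Qed.

Definition cnd (S : {set N}) (i : Ups) : bool :=
  ((val i).1 \in S) && (S :\ (val i).1 \subset (val i).2).

Lemma cvecE (e : Ups -> R) S :
  cvec e S = \sum_(i : Ups) e i * ((cnd (val S) i : nat)%:R).
Proof.
rewrite /cvec.
under eq_bigr do under eq_bigr do rewrite evE.
under eq_bigr do rewrite exchange_big /=.
rewrite exchange_big /=; apply: eq_bigr => i _.
under eq_bigr do rewrite -mulr_sumr.
rewrite -mulr_sumr; congr (_ * _).
have /andP [ni _] : upsP (val i) := valP i.
rewrite /cnd; case: (boolP ((val i).1 \in val S)) => ia /=.
  rewrite (bigD1 (val i).1) //= [X in _ + X]big1 ?addr0; last first.
    move=> a /andP [_ na]; rewrite big1 // => B _.
    by rewrite [val i]surjective_pairing xpair_eqE eq_sym (negbTE na).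
  case: (boolP (val S :\ (val i).1 \subset (val i).2)) => sub.
    rewrite (bigD1 (val i).2) /=; last by rewrite sub.
    rewrite [val i]surjective_pairing xpair_eqE !eqxx big1 ?addr0 // => B /andP [_ nB].
    by rewrite xpair_eqE eqxx eq_sym (negbTE nB).
  rewrite big1 // => B /andP [sB _].
  by case: (val i =P _) => [eB|] //; move: sub; rewrite eB /= sB.
rewrite big1 // => a aS; rewrite big1 // => B _.
by case: (val i =P _) => [eB|] //; move: ia; rewrite eB /= aS.
Qed.


Definition pullp (t : Sset -> R) (a : N) (B : {set N}) : R :=
  \sum_(S : Sset | (a \in val S) && (val S :\ a \subset B)) t S.
Definition pull (t : Sset -> R) (i : Ups) : R := pullp t (val i).1 (val i).2.

Lemma dot_cvec (t : Sset -> R) (e : Ups -> R) : dot t (cvec e) = dot (pull t) e.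
Proof.
rewrite /dot; under eq_bigr do rewrite cvecE mulr_sumr.
rewrite exchange_big; apply: eq_bigr => i _.
rewrite /pull /pullp mulr_suml [RHS]big_mkcond; apply: eq_bigr => S _.
by rewrite /cnd; case: ifP => _; rewrite /= ?mulr1 ?mulr0.
Qed.

Lemma Sset_card (S : Sset) : (1 < #|val S|)%N.
Proof. exact: valP S. Qed.

Lemma pullp_set0 (t : Sset -> R) (a : N) : pullp t a set0 = 0.
Proof.
rewrite /pullp big1 // => S /andP [aS]; rewrite subset0 => /eqP e.
have := Sset_card S; rewrite (cardsD1 a) aS e cards0 //.
Qed.

Lemma ev_pull (t : Sset -> R) (a : N) (B : {set N}) :
  a \notin B -> ev (pull t) a B = pullp t a B.
Proof.
move=> aB; have [->|nB] := eqVneq B set0; first by rewrite ev_set0 pullp_set0.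
by rewrite /ev insubT /= ?aB ?nB // => h; rewrite /pull.
Qed.

Lemma dag_noloop (G : dgraph) x : is_dag G -> x \notin G x.
Proof.
move=> /forallP /(_ x) /forallP /(_ x) /implyP h; apply/negP => hx.
by have := h hx; rewrite connect0.
Qed.

Lemma dag_antisym (G : dgraph) x y : is_dag G -> x \in G y -> y \in G x -> False.
Proof.
move=> /forallP /(_ x) /forallP /(_ y) /implyP h xy yx.
by have := h xy; rewrite connect1.
Qed.

Definition sinkp (G : dgraph) (S : {set N}) (x : N) : bool := (x \in S) && (S :\ x \subset G x).

Lemma sum_ind_le1 (T : finType) (P : pred T) :
  (forall x y, P x -> P y -> x = y) ->
  \sum_(x : T) ((P x : nat)%:R : R) = (([exists x, P x] : bool) : nat)%:R.
Proof.
move=> u; case: existsP => [[x0 Px0]|nP].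
  rewrite (bigD1 x0) //= Px0 big1 ?addr0 // => y ny.
  by case: (boolP (P y)) => // Py; move: ny; rewrite (u _ _ Py Px0) eqxx.
by rewrite big1 // => x _; case: (boolP (P x)) => // Px; case: nP; exists x.
Qed.

Lemma cvec_dag (G : dgraph) (S : Sset) : is_dag G ->
  cvec (eta G) S = (([exists x, sinkp G (val S) x] : bool) : nat)%:R.
Proof.
move=> dG.
have -> : cvec (eta G) S = dot (fun i => ((cnd (val S) i : nat)%:R : R)) (eta G).
  by rewrite cvecE /dot; apply: eq_bigr => i _; rewrite mulrC.
rewrite dot_eta -sum_ind_le1; last first.
  move=> x y /andP [xS sx] /andP [yS sy]; apply/eqP; apply: contraT => nxy.
  exfalso; apply: (dag_antisym (x := x) (y := y) dG).
    by apply: (subsetP sy); rewrite !inE xS nxy.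
  by apply: (subsetP sx); rewrite !inE yS eq_sym nxy.
apply: eq_bigr => x _.
have [e0|n0] := eqVneq (G x) set0.
  rewrite e0 ev_set0 /sinkp e0 subset0; case: (boolP (x \in val S)) => // xS /=.
  case: (boolP (_ == set0)) => // /eqP e; have := Sset_card S; by rewrite (cardsD1 x) xS e cards0.
rewrite /ev insubT /= ?dag_noloop // => h.
Qed.

Lemma dag_sink (G : dgraph) (S : {set N}) x0 : is_dag G -> x0 \in S ->
  exists2 x, x \in S & forall y, y \in S -> x \notin G y.
Proof.
move=> dG x0S.
pose d x := #|[set z | connect (edge G) x z]|.
case: (arg_minnP d x0S) => x xS xmin.
exists x => // y yS; apply/negP => xy.
have := xmin y yS; rewrite leqNgt => /negP; apply.
apply: proper_card; apply/properP; split.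
  apply/subsetP => z; rewrite !inE => yz.
  by apply: connect_trans yz; apply: connect1.
exists x; first by rewrite inE connect0.
rewrite inE; move: dG => /forallP /(_ x) /forallP /(_ y) /implyP; exact.
Qed.

Lemma markov_sink (G H : dgraph) (S : {set N}) : is_dag G -> is_dag H -> markov_equiv G H ->
  [exists x, sinkp G S x] -> [exists x, sinkp H S x].
Proof.
move=> dG dH [eadj eimm] /existsP [a /andP [aS sa]].
have [x xS xsink] := dag_sink dH aS.
apply/existsP; exists x; rewrite /sinkp xS /=; apply/subsetP => y; rewrite !inE => /andP [nyx yS].
have adjH : adj H y x -> y \in H x.
  by rewrite /adj => /orP [//|hx]; move: (xsink _ yS); rewrite hx.
apply: adjH; rewrite -eadj.
have inGa z : z \in S -> z != a -> z \in G a.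
  by move=> zS za; apply: (subsetP sa); rewrite !inE za zS.
have [exa|nxa] := eqVneq x a.
  by rewrite /adj exa inGa // -exa.
case: (boolP (adj G y x)) => // nadj.
have ya : y != a.
  by apply/eqP => eya; move: nadj; rewrite eya /adj (inGa x) // orbT.
have : immor G x a y.
  rewrite /immor (inGa x xS nxa) (inGa y yS ya) /=; apply/andP; split.
    by apply/eqP => exy; move: nyx; rewrite exy eqxx.
  by move: nadj; rewrite /adj orbC.
rewrite eimm /immor => /andP [xHa _]; by move: (xsink _ aS); rewrite xHa.
Qed.

Lemma cvec_markov (G H : dgraph) : is_dag G -> is_dag H -> markov_equiv G H ->
  cvec (eta G) =1 cvec (eta H).
Proof.
move=> dG dH m S; rewrite !cvec_dag //.
case: (boolP [exists x, sinkp G (val S) x]) => e1;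
  case: (boolP [exists x, sinkp H (val S) x]) => e2 //.
  by move: e2; rewrite (markov_sink dG dH m e1).
have m' : markov_equiv H G by case: m => h1 h2; split => *; rewrite ?h1 ?h2.
by move: e1; rewrite (markov_sink dH dG m' e2).
Qed.

End Comb.
Section Rank.
Variable R : realFieldType.
Variable N : finType.
Local Notation Ups := (Ups N).
Local Notation Sset := (Sset N).
Local Notation dgraph := (dgraph N).
Local Notation eta := (@Defs.eta R N).

Definition Hr (r : N -> nat) : dgraph := [ffun x => [set y | (r y < r x)%N]].

Lemma path_rank (G : dgraph) (r : N -> nat) : (forall x y, x \in G y -> (r x < r y)%N) ->
  forall p y, path (edge G) y p -> (r y <= r (last y p))%N.
Proof.
move=> hr; elim=> [|z p IH] y //= /andP [yz pz].
by apply: leq_trans (IH _ pz); apply: ltnW; apply: hr.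
Qed.

Lemma dag_rank (G : dgraph) (r : N -> nat) : (forall x y, x \in G y -> (r x < r y)%N) -> is_dag G.
Proof.
move=> hr; apply/forallP => x; apply/forallP => y; apply/implyP => xy.
apply/negP => /connectP [p pth ex].
have := path_rank hr pth; rewrite -ex leqNgt; by rewrite hr.
Qed.

Lemma Hr_dag r : is_dag (Hr r).
Proof. by apply: (dag_rank (r := r)) => x y; rewrite ffunE inE. Qed.

Lemma Hr_adj r : injective r -> forall x y, adj (Hr r) x y = (x != y).
Proof.
move=> ri x y; rewrite /adj !ffunE !inE.
case: (ltngtP (r x) (r y)) => h /=.
- by apply/esym/eqP => e; move: h; rewrite e ltnn.
- by apply/esym/eqP => e; move: h; rewrite e ltnn.
- by rewrite (ri _ _ h) eqxx.
Qed.

Lemma Hr_markov r1 r2 : injective r1 -> injective r2 -> markov_equiv (Hr r1) (Hr r2).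
Proof.
move=> i1 i2; split => [a b|a c b]; first by rewrite !Hr_adj.
by rewrite /immor !Hr_adj // !negbK; case: (a == b); rewrite ?andbF.
Qed.

Lemma Hr_c r : injective r -> forall S, cvec (eta (Hr r)) S = 1.
Proof.
move=> ri S; rewrite cvec_dag ?Hr_dag //.
have [x0 x0S] : exists x0, x0 \in val S.
  by apply/set0Pn; rewrite -card_gt0; apply: ltnW; exact: Sset_card.
case: (arg_maxnP r x0S) => x xS xmax.
suff -> : [exists x, sinkp (Hr r) (val S) x] by [].
apply/existsP; exists x; rewrite /sinkp; apply/andP; split; first exact: xS.
apply/subsetP => y.
rewrite !inE ffunE inE => /andP [nyx yS].
rewrite ltn_neqAle; apply/andP; split; last exact: xmax.
by apply: contra nyx => /eqP e; apply/eqP; exact: ri.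
Qed.

Definition rkf (f : N -> nat) (x : N) : nat := (f x * #|N| + enum_rank x)%N.

Lemma rkf_lt f x y : (rkf f y < rkf f x)%N =
  (f y < f x)%N || ((f y == f x) && (enum_rank y < enum_rank x)%N).
Proof.
rewrite /rkf; have hx := ltn_ord (enum_rank x); have hy := ltn_ord (enum_rank y).
move: hx hy; move: (val (enum_rank x)) (val (enum_rank y)) => c d.
move: (f x) (f y) #|N| => a b n hc hd.
apply/idP/idP.
- move=> h. case: (ltngtP b a) => //= hab.
  + have : (a * n + c < b * n + d)%N by nia.
    by rewrite ltnNge (ltnW h).
  + subst b; nia.
- case/orP => [h|/andP[/eqP -> h]]; nia.
Qed.

Lemma rkf_inj f : injective (rkf f).
Proof.
move=> x y e; apply: enum_rank_inj; apply: val_inj.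
have : (rkf f x %% #|N| = rkf f y %% #|N|)%N by rewrite e.
by rewrite /rkf !modnMDl !modn_small ?ltn_ord.
Qed.

(* classes for orderings C < a < b < rest *)
Definition cls (C : {set N}) (a b : N) (x : N) : nat :=
  (if x \in C then 0 else if x == a then 1 else if x == b then 2 else 3)%N.

Lemma Hr_cls_a (C : {set N}) (a b : N) : a \notin C -> Hr (rkf (cls C a b)) a = C.
Proof.
move=> aC; apply/setP => y; rewrite ffunE inE rkf_lt /cls (negbTE aC) eqxx.
case: (boolP (y \in C)) => //= yC.
case: (boolP (y == a)) => [/eqP ->|ya] /=; first by rewrite ltnn.
by case: (y == b).
Qed.

Lemma Hr_cls_b (C : {set N}) (a b : N) : a != b -> a \notin C -> b \notin C -> Hr (rkf (cls C a b)) b = a |: C.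
Proof.
move=> ab aC bC; apply/setP => y; rewrite ffunE inE rkf_lt /cls (negbTE bC) eqxx.
have ba : (b == a) = false by rewrite eq_sym (negbTE ab).
rewrite ba !inE.
case: (boolP (y \in C)) => yC; first by rewrite orbT.
case: (boolP (y == a)) => [/eqP ->|ya] //=.
by case: (boolP (y == b)) => [/eqP ->|yb] //=; rewrite ltnn.
Qed.

Lemma Hr_cls_other (C : {set N}) (a b x : N) : x != a -> x != b ->
  Hr (rkf (cls C a b)) x = Hr (rkf (cls C b a)) x.
Proof.
move=> xa xb; apply/setP => y; rewrite !ffunE !inE !rkf_lt /cls (negbTE xa) (negbTE xb).
case: (boolP (x \in C)) => xC; case: (boolP (y \in C)) => yC //=.
all: by case: (y == a); case: (y == b).
Qed.

Definition Idt (o : Ups -> R) : Prop := forall (a b : N) (C : {set N}),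
  a != b -> a \notin C -> b \notin C ->
  ev o b (a |: C) - ev o b C = ev o a (b |: C) - ev o a C.

Lemma Idt_of_const (o : Ups -> R) K :
  (forall r, injective r -> dot o (eta (Hr r)) = K) -> Idt o.
Proof.
move=> hK a b C ab aC bC.
set H1 := Hr (rkf (cls C a b)); set H2 := Hr (rkf (cls C b a)).
have e : \sum_x ev o x (H1 x) = \sum_x ev o x (H2 x).
  by rewrite -!dot_eta (hK _ (@rkf_inj (cls C a b))) (hK _ (@rkf_inj (cls C b a))).
have ba : b != a by rewrite eq_sym.
have split2 (H : dgraph) : \sum_x ev o x (H x) =
    ev o a (H a) + (ev o b (H b) + \sum_(x | (x != a) && (x != b)) ev o x (H x)).
  by rewrite (bigD1 a) // (bigD1 b) //=.
move: e; rewrite !split2.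
have -> : \sum_(x | (x != a) && (x != b)) ev o x (H1 x) =
          \sum_(x | (x != a) && (x != b)) ev o x (H2 x).
  by apply: eq_bigr => i /andP [ia ib]; rewrite /H1 /H2 Hr_cls_other.
rewrite /H1 /H2 Hr_cls_a // Hr_cls_b // Hr_cls_a // Hr_cls_b //.
move=> h; lra.
Qed.

Lemma SE_Idt (o : Ups -> R) : SE o -> Idt o.
Proof.
move=> hse; apply: (Idt_of_const (K := dot o (eta (Hr (rkf (fun _ => 0%N)))))) => r ri.
by apply: hse; rewrite ?Hr_dag //; apply: Hr_markov => //; apply: rkf_inj.
Qed.

End Rank.
Section Mob.
Variable R : realFieldType.
Variable N : finType.
Local Notation Ups := (Ups N).
Local Notation Sset := (Sset N).

Lemma sgn_sub m k : (k <= m)%N -> (-1) ^+ (m - k) = (-1) ^+ m * (-1) ^+ k :> R.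
Proof.
by move=> km; rewrite -{2}(subnK km) exprD -mulrA -expr2 sqrr_sign mulr1.
Qed.

Definition tg (x : N) (K : {set N}) : {set N} := if x \in K then K :\ x else x |: K.

Lemma tgK x : involutive (tg x).
Proof.
move=> K; rewrite /tg; case: (boolP (x \in K)) => xK.
  by rewrite !inE eqxx /= setD1K.
by rewrite setU11 setU1K.
Qed.

Lemma tg_sign x K : (-1) ^+ #|tg x K| = - (-1) ^+ #|K| :> R.
Proof.
rewrite /tg; case: (boolP (x \in K)) => xK.
  by rewrite [in RHS](cardsD1 x) xK add1n exprS mulN1r opprK.
by rewrite cardsU1 xK add1n exprS mulN1r.
Qed.

Lemma subD1_sub (K B : {set N}) x : x \in B -> (K :\ x \subset B) = (K \subset B).
Proof.
move=> xB; apply/idP/idP => h; apply/subsetP => y yK.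
  by case: (boolP (y == x)) => [/eqP ->//|ny]; apply: (subsetP h); rewrite !inE ny.
by move: yK; rewrite !inE => /andP [_ yK]; apply: (subsetP h).
Qed.

Lemma sub_D1 (A K : {set N}) x : x \notin A -> (A \subset K :\ x) = (A \subset K).
Proof. by move=> xA; rewrite subsetD1 xA andbT. Qed.

Lemma sub_U1 (A K : {set N}) x : x \notin A -> (A \subset x |: K) = (A \subset K).
Proof.
move=> xA; apply/idP/idP => h; last exact: (subset_trans h (subsetUr _ _)).
apply/subsetP => y yA; have := subsetP h y yA; rewrite !inE.
by case/orP => [/eqP ey|//]; move: yA; rewrite ey (negbTE xA).
Qed.

Lemma AL (A B : {set N}) : A \subset B ->
  \sum_(K : {set N} | (K \subset B) && (A \subset K)) (-1) ^+ #|K| =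
  if A == B then (-1) ^+ #|A| else 0 :> R.
Proof.
move=> AB; case: (eqVneq A B) => [<-|nAB].
  rewrite (big_pred1 A) // => K; by rewrite /= eqEsubset.
have [x /setDP [xB xA]] : exists x, x \in B :\: A.
  apply/set0Pn; apply: contra nAB; rewrite setD_eq0 => BA; by rewrite eqEsubset AB.
set S := (X in X = _).
have : S = - S.
  rewrite {1}/S (reindex_inj (can_inj (tgK x))) /= -sumrN.
  apply: eq_big => K; last by move=> _; rewrite tg_sign.
  rewrite /tg; case: (boolP (x \in K)) => xK.
    by rewrite subD1_sub // sub_D1.
  by rewrite subUset sub1set xB sub_U1.
move=> h; lra.
Qed.

Lemma tau_pickE (o : Ups -> R) (T : Sset) b : [pick b in val T] = Some b ->
  tau o T = \sum_(K : {set N} | (K \subset val T :\ b) && (K != set0))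
              (-1) ^+ (#|val T :\ b| - #|K|) * ev o b K.
Proof. by rewrite /tau => ->. Qed.

Lemma pick_Sset (T : Sset) : exists b, [pick b in val T] = Some b /\ b \in val T.
Proof.
case: pickP => [b bT|h]; first by exists b.
have := Sset_card T; rewrite (eq_card0 h) //.
Qed.

Lemma tau_ext (o1 o2 : Ups -> R) T : o1 =1 o2 -> tau o1 T = tau o2 T.
Proof.
move=> e; rewrite /tau; case: pickP => // b _.
by apply: eq_bigr => K _; rewrite (ev_ext _ _ e).
Qed.

Lemma tau_sub (o1 o2 : Ups -> R) T : tau (fun i => o1 i - o2 i) T = tau o1 T - tau o2 T.
Proof.
rewrite /tau; case: pickP => [b _|]; last by rewrite subrr.
by rewrite -sumrB; apply: eq_bigr => K _; rewrite ev_sub mulrBr.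
Qed.

Lemma tau0 T : tau (fun _ : Ups => 0 : R) T = 0.
Proof. by rewrite /tau; case: pickP => // b _; rewrite big1 // => K _; rewrite ev0 mulr0. Qed.

Lemma tau_pull (t : Sset -> R) T : tau (pull t) T = t T.
Proof.
have [b [pb bT]] := pick_Sset T.
rewrite (tau_pickE _ pb).
have -> : \sum_(K : {set N} | (K \subset val T :\ b) && (K != set0))
     (-1) ^+ (#|val T :\ b| - #|K|) * ev (pull t) b K =
   \sum_(K : {set N} | K \subset val T :\ b)
     (-1) ^+ #|val T :\ b| * (-1) ^+ #|K| * pullp t b K.
  rewrite [RHS](bigID (fun K => K != set0)) /= [X in _ = _ + X]big1; last first.
    by move=> K /andP [_ /negPn /eqP ->]; rewrite pullp_set0 mulr0.
  rewrite addr0; apply: eq_bigr => K /andP [KT _].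
  rewrite ev_pull; last by apply: contraT => /negPn bK; have := subsetP KT _ bK; rewrite !inE eqxx.
  by rewrite sgn_sub // subset_leq_card.
rewrite /pullp.
under eq_bigr do rewrite mulr_sumr.
rewrite (exchange_big_dep (fun S : Sset => b \in val S)) /=; last by move=> K S _ /andP [].
have sT : (-1) ^+ #|val T :\ b| * (-1) ^+ #|val T :\ b| = 1 :> R.
  by rewrite -expr2 sqrr_sign.
rewrite (bigD1 T) //= [X in _ + X]big1 ?addr0.
  rewrite -mulr_suml.
  have -> : \sum_(K : {set N} | [&& K \subset val T :\ b, b \in val T & val T :\ b \subset K])
      (-1) ^+ #|val T :\ b| * (-1) ^+ #|K| =
    (-1) ^+ #|val T :\ b| * \sum_(K : {set N} | (K \subset val T :\ b) && (val T :\ b \subset K)) (-1) ^+ #|K| :> R.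
    rewrite mulr_sumr; apply: eq_bigl => K; by rewrite bT.
  by rewrite AL // eqxx sT mul1r.
move=> S /andP [bS nST].
rewrite -mulr_suml; apply/eqP; rewrite mulf_eq0; apply/orP; left; apply/eqP.
have -> : \sum_(K : {set N} | [&& K \subset val T :\ b, b \in val S & val S :\ b \subset K])
      (-1) ^+ #|val T :\ b| * (-1) ^+ #|K| =
    (-1) ^+ #|val T :\ b| * \sum_(K : {set N} | (K \subset val T :\ b) && (val S :\ b \subset K)) (-1) ^+ #|K| :> R.
  rewrite mulr_sumr; apply: eq_bigl => K; by rewrite bS.
case: (boolP (val S :\ b \subset val T :\ b)) => sub.
  rewrite AL //; case: eqP => [e|_]; last by rewrite mulr0.
  case/eqP: nST; apply: val_inj.
  by transitivity (b |: (val S :\ b)); [rewrite setD1K | rewrite e setD1K].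
rewrite big_pred0 ?mulr0 // => K; apply/negP => /andP [KT SK].
by move: sub; rewrite (subset_trans SK KT).
Qed.


Lemma Idt_pull (t : Sset -> R) : Idt (pull t).
Proof.
move=> a b C ab aC bC.
have ba : b != a by rewrite eq_sym.
have baC : b \notin a |: C by rewrite !inE negb_or ba.
have abC : a \notin b |: C by rewrite !inE negb_or ab.
rewrite !ev_pull // /pullp.
have key (x y : N) : x != y -> x \notin C -> y \notin C ->
   \sum_(S : Sset | (y \in val S) && (val S :\ y \subset x |: C)) t S -
   \sum_(S : Sset | (y \in val S) && (val S :\ y \subset C)) t S =
   \sum_(S : Sset | [&& x \in val S, y \in val S & val S \subset x |: (y |: C)]) t S.
  move=> xy xC yC; rewrite (bigID (fun S : Sset => x \in val S)) /=.
  have -> : \sum_(S : Sset | (y \in val S) && (val S :\ y \subset x |: C) && (x \notin val S)) t S =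
            \sum_(S : Sset | (y \in val S) && (val S :\ y \subset C)) t S.
    apply: eq_bigl => S; rewrite !subDset.
    case: (boolP (x \in val S)) => xS /=; last by rewrite andbT setUCA sub_U1.
    rewrite andbF; apply/esym/negP => /andP [_ h].
    by have := subsetP h x xS; rewrite !inE (negbTE xy) (negbTE xC).
  rewrite addrK; apply: eq_bigl => S; rewrite subDset setUCA.
  by case: (x \in val S); rewrite /= ?andbT ?andbF.
rewrite key // key //.
by apply: eq_bigl => S; rewrite setUCA; case: (a \in val S); case: (b \in val S).
Qed.

Lemma Idt_sub (o1 o2 : Ups -> R) : Idt o1 -> Idt o2 -> Idt (fun i => o1 i - o2 i).
Proof.
move=> h1 h2 a b C ab aC bC; rewrite !ev_sub.
have := h1 a b C ab aC bC; have := h2 a b C ab aC bC; lra.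
Qed.

Lemma zero_of_Idt (d : Ups -> R) : Idt d -> (forall T, tau d T = 0) ->
  forall m a (B : {set N}), (#|B| <= m)%N -> ev d a B = 0.
Proof.
move=> hI ht; elim=> [|m IH] a B hB.
  by move: hB; rewrite leqn0 cards_eq0 => /eqP ->; rewrite ev_set0.
case: (boolP (a \in B)) => aB; first exact: ev_in.
case: (eqVneq B set0) => [->|nB]; first by rewrite ev_set0.
have cT : (1 < #|a |: B|)%N.
  by rewrite cardsU1 aB add1n ltnS card_gt0.
pose T : Sset := Sub (a |: B) cT.
have [b [pb bT]] := pick_Sset T.
have cTb : #|val T :\ b| = #|B|.
  by move: (cardsD1 b (val T)); rewrite bT /= cardsU1 aB !add1n => -[].
have eb : ev d b (val T :\ b) = 0.
  rewrite -(ht T) (tau_pickE _ pb) (bigD1 (val T :\ b)) /=; last first.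
    by rewrite subxx -card_gt0 cTb card_gt0.
  rewrite subnn expr0 mul1r big1 ?addr0 // => K /andP [/andP [KT _] nK].
  rewrite (IH b K) ?mulr0 //.
  have : (#|K| < #|val T :\ b|)%N by apply: proper_card; rewrite properEneq nK KT.
  by rewrite cTb => h; rewrite -ltnS (leq_trans h hB).
have [eab|nab] := eqVneq b a.
  by move: eb; rewrite eab /= setU1K.
have bT' : b \in a |: B := bT.
have bB : b \in B by move: bT'; rewrite !inE (negbTE nab).
have hC : (#|B :\ b| <= m)%N by move: hB; rewrite (cardsD1 b B) bB.
have aC : a \notin B :\ b by rewrite !inE negb_and aB orbT.
have bC : b \notin B :\ b by rewrite !inE eqxx.
have eTb : (a |: B) :\ b = a |: (B :\ b).
  apply/setP => y; rewrite !inE; case: (boolP (y == b)) => [/eqP ->|] /=; last by [].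
  by rewrite (negbTE nab).
have ab : a != b by rewrite eq_sym.
have := hI a b (B :\ b) ab aC bC.
have eb' : ev d b (a |: (B :\ b)) = 0 by rewrite -eTb.
rewrite eb' (IH b _ hC) (IH a _ hC) setD1K // => h; lra.
Qed.

Lemma pull_tau (o : Ups -> R) : Idt o -> forall i, o i = pull (tau o) i.
Proof.
move=> hI i; apply/eqP; rewrite -subr_eq0; apply/eqP.
pose d := fun i => o i - pull (tau o) i.
have hd : Idt d by apply: Idt_sub => //; apply: Idt_pull.
have td T : tau d T = 0 by rewrite tau_sub tau_pull subrr.
transitivity (d i) => //; by rewrite -(ev_val d) (zero_of_Idt hd td (m := #|(val i).2|) (val i).1 (leqnn _)).
Qed.

Lemma dot_tau (o : Ups -> R) e : Idt o -> dot o e = dot (tau o) (cvec e).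
Proof.
move=> hI; rewrite dot_cvec; apply: eq_bigr => i _; by rewrite -pull_tau.
Qed.

Lemma pull_inj (t : Sset -> R) : (forall i, pull t i = 0) -> forall T, t T = 0.
Proof. by move=> h T; rewrite -tau_pull (tau_ext _ h) tau0. Qed.

End Mob.
Section Conv.
Variable R : realFieldType.

Lemma dot_comb (I J : finType) (o : I -> R) (lam : J -> R) (f : J -> I -> R) (x : I -> R) :
  (forall i, x i = \sum_j lam j * f j i) -> dot o x = \sum_j lam j * dot o (f j).
Proof.
move=> hx; rewrite /dot; under eq_bigr do rewrite hx mulr_sumr.
rewrite exchange_big; apply: eq_bigr => j _; rewrite mulr_sumr.
by apply: eq_bigr => i _; rewrite mulrCA.
Qed.

Lemma conv_valid (I J : finType) (P : pred J) (f : J -> I -> R) o u x :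
  (forall j, P j -> dot o (f j) <= u) -> conv_fam P f x -> dot o x <= u.
Proof.
move=> hv [lam [l0 lP l1 lx]]; rewrite (dot_comb o lx).
rewrite -[u]mul1r -l1 mulr_suml; apply: ler_sum => j _.
case: (boolP (P j)) => Pj; first by apply: ler_wpM2l => //; apply: hv.
by rewrite lP // !mul0r.
Qed.

Lemma conv_face (I J : finType) (P : pred J) (f : J -> I -> R) o u o' u' x :
  (forall j, P j -> dot o (f j) <= u) ->
  (forall j, P j -> dot o (f j) = u -> dot o' (f j) = u') ->
  conv_fam P f x -> dot o x = u -> dot o' x = u'.
Proof.
move=> hv hf [lam [l0 lP l1 lx]] hx.
have s0 : \sum_j lam j * (u - dot o (f j)) = 0.
  under eq_bigr do rewrite mulrBr.
  by rewrite sumrB -mulr_suml l1 mul1r -(dot_comb o lx) hx subrr.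
have t0 : forall j, lam j * (u - dot o (f j)) = 0.
  move=> j; move/psumr_eq0P: s0; apply => // k _.
  case: (boolP (P k)) => Pk; last by rewrite lP // mul0r.
  by apply: mulr_ge0 => //; rewrite subr_ge0; apply: hv.
rewrite (dot_comb o' lx) -[u']mul1r -l1 mulr_suml; apply: eq_bigr => j _.
case: (eqVneq (lam j) 0) => [->|nz]; first by rewrite !mul0r.
have Pj : P j by apply: contraT => nP; move: nz; rewrite lP ?eqxx.
move/eqP: (t0 j); rewrite mulf_eq0 (negbTE nz) /= subr_eq0 => /eqP e.
by rewrite hf.
Qed.

Lemma conv_vertex (I J : finType) (P : pred J) (f : J -> I -> R) j :
  P j -> conv_fam P f (f j).
Proof.
move=> Pj; exists (fun k => ((k == j) : nat)%:R); split.
- by move=> k; case: (k == j).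
- by move=> k nk; case: eqP => // e; move: nk; rewrite e Pj.
- by rewrite (bigD1 j) //= eqxx big1 ?addr0 // => k /negbTE ->.
- move=> i; rewrite (bigD1 j) //= eqxx mul1r big1 ?addr0 // => k /negbTE ->.
  by rewrite mul0r.
Qed.

Lemma conv_map (I I' J : finType) (P : pred J) (f : J -> I -> R) (g : J -> I' -> R)
    (L : (I -> R) -> I' -> R) x :
  (forall (lam : J -> R) (y : I -> R), (forall i, y i = \sum_j lam j * f j i) ->
      forall i', L y i' = \sum_j lam j * g j i') ->
  conv_fam P f x -> conv_fam P g (L x).
Proof.
move=> hL [lam [l0 lP l1 lx]]; exists lam; split => //; exact: hL.
Qed.

Lemma dot_e (I : finType) (x : I -> R) j : dot (fun i => ((i == j) : nat)%:R) x = x j.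
Proof.
rewrite /dot (bigD1 j) //= eqxx mul1r big1 ?addr0 // => i /negbTE ->; by rewrite mul0r.
Qed.

Lemma dot_eq_fun (I : finType) (o1 o2 : I -> R) : (forall e, dot o1 e = dot o2 e) -> forall i, o1 i = o2 i.
Proof.
move=> h i; have := h (fun k => ((k == i) : nat)%:R).
rewrite /dot (bigD1 i) //= (bigD1 i (P := xpredT)) //= !eqxx !mulr1 !big1 ?addr0 //.
  by move=> k /negbTE ->; rewrite mulr0.
by move=> k /negbTE ->; rewrite mulr0.
Qed.

Lemma facet_char (I : finType) (Pol F : (I -> R) -> Prop) :
  (0 < #|I|)%N -> dim_ge Pol #|I| ->
  (is_facet Pol F <-> [/\ is_face Pol F, dim_ge F #|I|.-1 & ~ dim_ge F #|I|]).
Proof.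
move=> I0 full.
have dP m : dim_ge Pol m <-> (m <= #|I|)%N.
  split; [exact: dim_ge_le | move=> h; exact: dim_ge_mono full h].
split.
  case=> fa h; split => //.
    by apply/h; rewrite prednK //; apply/dP.
  by move/h/dP; rewrite ltnn.
case=> fa d1 d2; split => // k; split.
  move=> dk; apply/dP; case: (ltnP k #|I|) => // hk.
  by case: d2; apply: dim_ge_mono dk hk.
move/dP => hk; apply: dim_ge_mono d1 _; by rewrite -ltnS prednK.
Qed.

End Conv.
Section Poly2.
Variable R : realFieldType.
Variable N : finType.
Local Notation Ups := (Ups N).
Local Notation Sset := (Sset N).
Local Notation dgraph := (dgraph N).
Local Notation eta := (@Defs.eta R N).
Local Notation PN := (PN R N).
Local Notation CN := (CN R N).

Lemma eta_PN (G : dgraph) : is_dag G -> PN (eta G).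
Proof. by move=> dG; apply: (conv_vertex (fun G => eta G) dG). Qed.

Lemma c_CN (G : dgraph) : is_dag G -> CN (cvec (eta G)).
Proof. by move=> dG; apply: (conv_vertex (fun G => cvec (eta G)) dG). Qed.

Lemma cvec_dot (e : Ups -> R) S : cvec e S = dot (fun i => ((cnd (val S) i : nat)%:R)) e.
Proof. by rewrite cvecE /dot; apply: eq_bigr => i _; rewrite mulrC. Qed.

Lemma PN_CN (x : Ups -> R) : PN x -> CN (cvec x).
Proof.
apply: conv_map => lam y hy S.
by rewrite cvec_dot (dot_comb _ hy); apply: eq_bigr => G _; rewrite cvec_dot.
Qed.

Lemma CN_PN (c : Sset -> R) : CN c -> exists x, PN x /\ forall S, c S = cvec x S.
Proof.
move=> [lam [l0 lP l1 lx]].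
pose x i := \sum_G lam G * eta G i.
have hx : forall i, x i = \sum_G lam G * eta G i by [].
exists x; split; first by exists lam.
move=> S; rewrite lx cvec_dot (dot_comb _ hx); apply: eq_bigr => G _; by rewrite cvec_dot.
Qed.

Definition upd (G : dgraph) (a : N) (B : {set N}) : dgraph :=
  [ffun x => if x == a then B else G x].

Lemma dag_sub (G H : dgraph) : is_dag G -> (forall x, H x \subset G x) -> is_dag H.
Proof.
move=> dG sub; apply/forallP => x; apply/forallP => y; apply/implyP => xy.
have xy' : edge G x y by apply: (subsetP (sub y)).
move: dG => /forallP /(_ x) /forallP /(_ y) /implyP /(_ xy'); apply: contra.
apply: connect_sub => u v uv; apply: connect1; exact: (subsetP (sub v)).
Qed.

Lemma dot_upd (o : Ups -> R) (G : dgraph) (a : N) (B : {set N}) :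
  dot o (eta (upd G a B)) = dot o (eta G) - ev o a (G a) + ev o a B.
Proof.
rewrite !dot_eta (bigD1 a) //= [in RHS](bigD1 a) //= ffunE eqxx.
have -> : \sum_(i | i != a) ev o i (upd G a B i) = \sum_(i | i != a) ev o i (G i).
  by apply: eq_bigr => i /negbTE ia; rewrite ffunE ia.
lra.
Qed.

Definition G0 : dgraph := [ffun _ => set0].

Lemma G0_dag : is_dag G0.
Proof. by apply: (dag_rank (r := fun _ => 0%N)) => x y; rewrite ffunE inE. Qed.

Lemma dot_G0 (o : Ups -> R) : dot o (eta G0) = 0.
Proof. by rewrite dot_eta big1 // => x _; rewrite ffunE ev_set0. Qed.

Lemma sg_dag (a : N) (B : {set N}) : a \notin B -> is_dag (upd G0 a B).
Proof.
move=> aB; apply: (dag_rank (r := fun x => (x == a) : nat)) => x y.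
rewrite !ffunE; case: (eqVneq y a) => [ey|nya]; last by rewrite inE.
move=> xB; case: (eqVneq x a) => [ex|//].
by move: aB; rewrite -ex xB.
Qed.

Lemma dot_sg (o : Ups -> R) (a : N) (B : {set N}) : dot o (eta (upd G0 a B)) = ev o a B.
Proof. by rewrite dot_upd dot_G0 ffunE ev_set0 subrr add0r. Qed.

Lemma ann_dags (o : Ups -> R) u :
  (forall G, is_dag G -> dot o (eta G) = u) -> u = 0 /\ forall i, o i = 0.
Proof.
move=> h; have u0 : u = 0 by rewrite -(h _ G0_dag) dot_G0.
split => // i; have /andP [ni _] : upsP (val i) := valP i.
by rewrite -ev_val -dot_sg (h _ (sg_dag ni)).
Qed.

Lemma PN_full : dim_ge PN #|{: Ups}|.
Proof.
apply: (span_dim (P := fun G : dgraph => is_dag G) (Y := fun G => eta G) (z := 0)).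
- by move=> G; apply: eta_PN.
- move=> o u h; have [u0 o0] := ann_dags h.
  have -> : cw (whom o u) = 0.
    apply/colP => l; rewrite !mxE; case: (enum_val l) => [i|] /=; by rewrite ?o0 ?u0 ?oppr0.
  by rewrite trmx0 sub0mx.
- by rewrite mxrank0 addn0 card_option.
Qed.

Lemma CN_full : dim_ge CN #|{: Sset}|.
Proof.
apply: (span_dim (P := fun G : dgraph => is_dag G) (Y := fun G => cvec (eta G)) (z := 0)).
- by move=> G; apply: c_CN.
- move=> t u h.
  have [u0 o0] : u = 0 /\ forall i, pull t i = 0.
    by apply: ann_dags => G dG; rewrite -dot_cvec h.
  have t0 := pull_inj o0.
  have -> : cw (whom t u) = 0.
    apply/colP => l; rewrite !mxE; case: (enum_val l) => [i|] /=; by rewrite ?t0 ?u0 ?oppr0.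
  by rewrite trmx0 sub0mx.
- by rewrite mxrank0 addn0 card_option.
Qed.

Lemma two_elems : (1 < #|N|)%N -> exists a b : N, a != b.
Proof. by move/card_gt1P => [a [b [_ _ ab]]]; exists a, b. Qed.

Lemma Ups_pos : (1 < #|N|)%N -> (0 < #|{: Ups}|)%N.
Proof.
move/two_elems => [a [b ab]]; apply/card_gt0P.
have h : upsP (a, [set b]) by rewrite /upsP /= inE ab; apply/set0Pn; exists b; rewrite inE.
by exists (Sub (a, [set b]) h).
Qed.

Lemma Sset_pos : (1 < #|N|)%N -> (0 < #|{: Sset}|)%N.
Proof.
move/two_elems => [a [b ab]]; apply/card_gt0P.
have h : (1 < #|[set a; b]|)%N by rewrite cards2 ab.
by exists (Sub [set a; b] h).
Qed.

End Poly2.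
Section Main.
Variable R : realFieldType.
Variable N : finType.
Local Notation Ups := (Ups N).
Local Notation Sset := (Sset N).
Local Notation dgraph := (dgraph N).
Local Notation eta := (@Defs.eta R N).
Local Notation PN := (PN R N).
Local Notation CN := (CN R N).

Lemma dot_Hr (t : Sset -> R) r : injective r -> dot t (cvec (eta (Hr r))) = dot t (one_imset R N).
Proof. by move=> ri; apply: eq_bigr => S _; rewrite (Hr_c R ri). Qed.

Lemma one_CN : CN (one_imset R N).
Proof.
have [lam [l0 lP l1 lx]] := c_CN R (Hr_dag (@rkf N (fun _ => 0%N))).
exists lam; split => // S; rewrite -[LHS](Hr_c R (@rkf_inj N (fun _ => 0%N)) S); exact: lx.
Qed.

Lemma valid_CP (o : Ups -> R) u : Idt o -> valid PN o u -> valid CN (tau o) u.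
Proof.
move=> hI vP c /CN_PN [x [Px cx]].
have -> : dot (tau o) c = dot (tau o) (cvec x) by apply: eq_bigr => S _; rewrite cx.
by rewrite -dot_tau //; apply: vP.
Qed.

Lemma part2 (F : (Sset -> R) -> Prop) : is_facet CN F ->
  exists (o : Ups -> R) (u : R), [/\ SE o, valid PN o u &
        forall c, F c <-> face_of CN (tau o) u c].
Proof.
move=> [[t [u [vt hF]]] _].
exists (pull t), u; split.
- move=> G H dG dH m; rewrite -!dot_cvec; apply: eq_bigr => S _.
  by rewrite (cvec_markov R dG dH m).
- by move=> x Px; rewrite -dot_cvec; apply: vt; apply: PN_CN.
- move=> c; rewrite hF /face_of.
  have -> : dot (tau (pull t)) c = dot t c by apply: eq_bigr => S _; rewrite tau_pull.
  by [].
Qed.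

Lemma part3 (F : (Sset -> R) -> Prop) : (1 < #|N|)%N -> is_facet CN F ->
  F (one_imset R N) -> ~ F (zero_imset R N).
Proof.
move=> hN fF F1 F0.
have [[t [u [vt hF]]] _] := fF.
have u0 : u = 0.
  have [_ <-] := (hF _).1 F0; by rewrite /dot big1 // => S _; rewrite mulr0.
have u1 : dot t (one_imset R N) = 0 by rewrite -u0; have [_ ->] := (hF _).1 F1.
pose o := pull t.
have vo G : is_dag G -> dot o (eta G) <= 0.
  by move=> dG; rewrite -dot_cvec -u0; apply: vt; apply: (c_CN R).
have o0 i : o i = 0.
  have /andP [aB nB] : upsP (val i) := valP i.
  set a := (val i).1 in aB *; set B := (val i).2 in aB nB *.
  rewrite -ev_val -/a -/B; apply/eqP; rewrite eq_le; apply/andP; split.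
    by rewrite -dot_sg; apply: vo; apply: sg_dag.
  pose H := Hr (rkf (cls B a a)).
  have HB : H a = B by rewrite /H Hr_cls_a.
  have dH : is_dag H := Hr_dag _.
  have eH : dot o (eta H) = 0 by rewrite -dot_cvec dot_Hr ?u1 //; exact: rkf_inj.
  have dG' : is_dag (upd H a set0).
    by apply: (dag_sub dH) => x; rewrite ffunE; case: (x == a) => //; apply: sub0set.
  have := vo _ dG'; rewrite dot_upd eH HB ev_set0 addr0 sub0r oppr_le0; exact.
have t0 := pull_inj o0.
have FC c : CN c -> F c.
  move=> Cc; apply/hF; split => //; rewrite u0 /dot big1 // => S _; by rewrite t0 mul0r.
have [_ _ nd] := (facet_char _ (Sset_pos hN) (@CN_full R N)).1 fF.
by apply: nd; apply: (dim_ge_sub FC); exact: (@CN_full R N).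
Qed.

End Main.
Section Part1.
Variable R : realFieldType.
Variable N : finType.
Local Notation Ups := (Ups N).
Local Notation Sset := (Sset N).
Local Notation dgraph := (dgraph N).
Local Notation eta := (@Defs.eta R N).
Local Notation PN := (PN R N).
Local Notation CN := (CN R N).

Lemma pull_scale (t : Sset -> R) a i : pull (fun S => a * t S) i = a * pull t i.
Proof. by rewrite /pull /pullp mulr_sumr. Qed.

Lemma pull_sub (t1 t2 : Sset -> R) i : pull (fun S => t1 S - t2 S) i = pull t1 i - pull t2 i.
Proof. by rewrite /pull /pullp sumrB. Qed.

Lemma pull_zero (t : Sset -> R) i : (forall S, t S = 0) -> pull t i = 0.
Proof. by move=> h; rewrite /pull /pullp big1. Qed.

Lemma z_scale (I : finType) (o o' : I -> R) u u' a :
  (forall j, o' j = a * o j) -> u' = a * u ->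
  ((cw (whom o' u'))^T <= (cw (whom o u))^T)%MS.
Proof.
move=> ho hu.
have -> : (cw (whom o' u'))^T = a *: (cw (whom o u))^T.
  apply/rowP => l; rewrite !mxE; case: (enum_val l) => [i|] /=; by rewrite ?ho ?hu ?mulrN.
by apply: scalemx_sub.
Qed.

Lemma ev_ei (i : Ups) (a : N) (B : {set N}) :
  ev (fun j => ((j == i) : nat)%:R : R) a B = ((val i == (a, B)) : nat)%:R.
Proof.
rewrite evE (bigD1 i) //= eqxx mul1r big1 ?addr0 // => j /negbTE ->; by rewrite mul0r.
Qed.

Lemma ei_not_Idt (i : Ups) : ~ Idt (fun j => ((j == i) : nat)%:R : R).
Proof.
move=> hI; have /andP [vD nD] : upsP (val i) := valP i.
have [w wD] := set0Pn _ nD.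
have wv : w != (val i).1 by apply: contraNneq vD => <-.
have wC : w \notin (val i).2 :\ w by rewrite !inE eqxx.
have vC : (val i).1 \notin (val i).2 :\ w by rewrite !inE negb_and vD orbT.
have := hI w (val i).1 ((val i).2 :\ w) wv wC vC.
rewrite setD1K // !ev_ei -surjective_pairing eqxx.
have -> : (val i == ((val i).1, (val i).2 :\ w)) = false.
  apply/negbTE; rewrite [X in X == _]surjective_pairing xpair_eqE eqxx /=.
  by apply/eqP => e; move: wC; rewrite -e wD.
have n2 X : (val i == (w, X)) = false.
  by apply/negbTE; rewrite [X in X == _]surjective_pairing xpair_eqE eq_sym (negbTE wv).
rewrite !n2 /= subr0 subrr => /eqP; by rewrite oner_eq0.
Qed.

Lemma Idt_scale (o : Ups -> R) a : Idt o -> Idt (fun j => a * o j).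
Proof. by move=> h x y C xy xC yC; rewrite !ev_scale -!mulrBr h. Qed.

Lemma Idt_ext (o1 o2 : Ups -> R) : o1 =1 o2 -> Idt o1 -> Idt o2.
Proof. by move=> e h x y C xy xC yC; rewrite -!(ev_ext _ _ e) h. Qed.

Lemma mono_gen (o : Ups -> R) :
  (forall v (B : {set N}) w, v \notin B -> w \notin B -> w != v -> ev o v B <= ev o v (w |: B)) ->
  forall m v (B B' : {set N}), (#|B' :\: B| <= m)%N -> v \notin B' -> B \subset B' -> ev o v B <= ev o v B'.
Proof.
move=> h1; elim=> [|m IH] v B B' hm vB' BB'.
  move: hm; rewrite leqn0 cards_eq0 setD_eq0 => B'B.
  by have -> : B = B' by apply/eqP; rewrite eqEsubset BB'.
case: (boolP (B' \subset B)) => B'B.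
  by have -> : B = B' by apply/eqP; rewrite eqEsubset BB'.
have [w /setDP [wB' wB]] : exists w, w \in B' :\: B.
  by apply/set0Pn; rewrite setD_eq0.
have vB'' : v \notin B' :\ w by rewrite !inE negb_and vB' orbT.
apply: le_trans (IH v B (B' :\ w) _ vB'' _) _.
- move: hm; rewrite (cardsD1 w (B' :\: B)) !inE wB wB' /= add1n ltnS.
  by rewrite !setDDl setUC.
- apply/subsetP => y yB; rewrite !inE (subsetP BB') // andbT.
  by apply: contraNneq wB => <-.
- rewrite -{2}(setD1K wB'); apply: h1 => //; first by rewrite !inE eqxx.
  by apply: contraNneq vB' => <-.
Qed.

Definition ancr (G : dgraph) (x : N) : nat := #|[set z | connect (edge G) z x]|.

Lemma anc_rank_sub (G : dgraph) : is_dag G -> forall x, G x \subset Hr (rkf (ancr G)) x.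
Proof.
move=> dG x; apply/subsetP => y yx; rewrite ffunE inE rkf_lt; apply/orP; left.
apply: proper_card; apply/properP; split.
  apply/subsetP => z; rewrite !inE => zy; apply: connect_trans zy _; exact: connect1.
exists x; first by rewrite inE connect0.
rewrite inE; move: dG => /forallP /(_ y) /forallP /(_ x) /implyP; exact.
Qed.

Lemma o_pull (o : Ups -> R) : Idt o -> forall i, o i = pull (tau o) i.
Proof. exact: pull_tau. Qed.

End Part1.
Section Part1b.
Variable R : realFieldType.
Variable N : finType.
Local Notation Ups := (Ups N).
Local Notation Sset := (Sset N).
Local Notation dgraph := (dgraph N).
Local Notation eta := (@Defs.eta R N).
Local Notation PN := (PN R N).
Local Notation CN := (CN R N).

Lemma exists_nz (I : finType) (o : I -> R) : (exists i, o i != 0) \/ (forall i, o i = 0).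
Proof.
case: (boolP [exists i, o i != 0]) => [/existsP h|/existsPn h]; [left | right] => //.
by move=> i; apply/eqP; move: (h i); rewrite negbK.
Qed.

Lemma part1 (o : Ups -> R) u : (1 < #|N|)%N -> SE o -> valid PN o u ->
  (is_facet PN (face_of PN o u) <->
   is_facet CN (face_of CN (tau o) u) /\ face_of CN (tau o) u (one_imset R N)).
Proof.
move=> hN hse vP.
have hI : Idt o := SE_Idt hse.
set t := tau o.
have hdot e : dot o e = dot t (cvec e) by apply: dot_tau.
have opull i : o i = pull t i by apply: pull_tau.
have vC : valid CN t u := valid_CP hI vP.
have U0 := Ups_pos hN; have S0 := Sset_pos hN.
have fcP := facet_char (face_of PN o u) U0 (@PN_full R N).
have fcC := facet_char (face_of CN t u) S0 (@CN_full R N).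
have kU : (#|{: Ups}|.-1).+1 = #|{: Ups}| by rewrite prednK.
have kS : (#|{: Sset}|.-1).+1 = #|{: Sset}| by rewrite prednK.
have vPG G : is_dag G -> dot o (eta G) <= u by move=> dG; apply: vP; apply: eta_PN.
have faceP o' u' : (forall G, is_dag G -> dot o (eta G) = u -> dot o' (eta G) = u') ->
    forall x, face_of PN o u x -> dot o' x = u'.
  move=> h x [Px ox]; apply: (conv_face (f := fun G => eta G) (P := fun G => is_dag G) _ _ Px ox).
    by move=> G dG; apply: vPG.
  exact: h.
have CtoP c : face_of CN t u c -> exists x, face_of PN o u x /\ forall S, c S = cvec x S.
  move=> [/CN_PN [x [Px cx]] tc]; exists x; split => //; split => //.
  by rewrite hdot -tc; apply: eq_bigr => S _; rewrite cx.
split.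
-
  move=> fP; have [faP dP1 ndP] := fcP.1 fP.
  have [[i0 oi0]|o0] := exists_nz o; last first.
    exfalso; apply: ndP.
    have [x [Fx _]] := dP1; have [_ ox] := Fx ord0.
    have u0 : u = 0 by rewrite -ox /dot big1 // => i _; rewrite o0 mul0r.
    apply: (dim_ge_sub _ (@PN_full R N)) => y Py; split => //.
    by rewrite u0 /dot big1 // => i _; rewrite o0 mul0r.
  have annP o' u' : (forall x, face_of PN o u x -> dot o' x = u') ->
      exists a, (forall i, o' i = a * o i) /\ u' = a * u.
    move=> h; apply: (ann_facet dP1 kU oi0); [by move=> x [] | exact: h].
  have rich (i : Ups) : exists G, [/\ is_dag G, dot o (eta G) = u & G (val i).1 = (val i).2].
    case: (boolP [exists G, [&& is_dag G, dot o (eta G) == u & G (val i).1 == (val i).2]]).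
      by move/existsP => [G /and3P [dG /eqP h1 /eqP e]]; exists G.
    move/existsPn => hn; exfalso.
    pose ei := fun j : Ups => ((j == i) : nat)%:R : R.
    have [a [ha _]] : exists a, (forall j, ei j = a * o j) /\ 0 = a * u.
      apply: annP; apply: faceP => G dG oG.
      rewrite dot_e /Defs.eta; move: (hn G); rewrite dG oG eqxx /=.
      by case: (G (val i).1 == (val i).2).
    apply: (@ei_not_Idt R N i); apply: (Idt_ext (o1 := fun j => a * o j)).
      by move=> j; rewrite -[RHS]/(ei j) ha.
    exact: Idt_scale.
  have mono1 v (B : {set N}) w : v \notin B -> w \notin B -> w != v ->
      ev o v B <= ev o v (w |: B).
    move=> vB wB wv.
    have hu : upsP (v, w |: B).
      by rewrite /upsP /= !inE negb_or eq_sym wv vB /=; apply/set0Pn; exists w; rewrite !inE eqxx.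
    have [G [dG oG Gv]] := rich (Sub (v, w |: B) hu).
    rewrite /= in Gv.
    have dG' : is_dag (upd G v B).
      apply: (dag_sub dG) => x; rewrite ffunE; case: eqP => [->|_]; last exact: subxx.
      by rewrite Gv subsetUr.
    have := vPG _ dG'; rewrite dot_upd oG Gv => h; lra.
  have monoG := mono_gen mono1.
  (* a complete DAG in the face *)
  have /card_gt0P [i1 _] := U0.
  have [G [dG oG _]] := rich i1.
  pose H := Hr (rkf (ancr G)).
  have dH : is_dag H := Hr_dag _.
  have oH : dot o (eta H) = u.
    apply/eqP; rewrite eq_le vPG //=.
    rewrite -{1}oG !dot_eta; apply: ler_sum => x _.
    apply: (monoG #|H x :\: G x|) => //; first exact: dag_noloop.
    exact: anc_rank_sub.
  have t1 : dot t (one_imset R N) = u.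
    by rewrite -(dot_Hr _ (@rkf_inj N (ancr G))) -hdot.
  have one_in : face_of CN t u (one_imset R N) by split => //; exact: one_CN.
  split => //; apply/fcC; split.
  - by exists t, u; split.
  - apply: (span_dim (J := dgraph) (P := fun G => is_dag G && (dot o (eta G) == u))
                     (Y := fun G => cvec (eta G)) (z := (cw (whom t u))^T)).
    + move=> G' /andP [dG' /eqP oG']; split; first exact: (c_CN R).
      by rewrite -hdot.
    + move=> t' u' ht'.
      have [a [ha hu]] : exists a, (forall i, pull t' i = a * o i) /\ u' = a * u.
        apply: annP; apply: faceP => G' dG' oG'.
        by rewrite -dot_cvec; apply: ht'; rewrite dG' oG' eqxx.
      apply: (z_scale (a := a)) => //.
      move=> S; apply/eqP; rewrite -subr_eq0; apply/eqP; move: S.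
      apply: (pull_inj (t := fun S => t' S - a * t S)) => i.
      by rewrite pull_sub pull_scale ha opull subrr.
    + have h2 : (#|{: Sset}|.+1 = #|{: option Sset}|)%N := esym (card_option _).
      rewrite kS; apply: (@leq_trans (#|{: Sset}| + 1)); first by rewrite leq_add2l rank_leq_row.
      by rewrite addn1 h2.
  - move=> dC; have t0 := ann_full dC (fun x (h : face_of CN t u x) => h.2).
    move: oi0; rewrite opull pull_zero ?eqxx //.
- move=> [fC F1].
  have [faC dC1 ndC] := fcC.1 fC.
  have t1 : dot t (one_imset R N) = u := F1.2.
  have [[T0 tT0]|t0] := exists_nz t; last first.
    exfalso; apply: ndC.
    have u0 : u = 0 by rewrite -t1 /dot big1 // => S _; rewrite t0 mul0r.
    apply: (dim_ge_sub _ (@CN_full R N)) => c Cc; split => //.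
    by rewrite u0 /dot big1 // => S _; rewrite t0 mul0r.
  have annC t' u' : (forall c, face_of CN t u c -> dot t' c = u') ->
      exists a, (forall S, t' S = a * t S) /\ u' = a * u.
    move=> h; apply: (ann_facet dC1 kS tT0); [by move=> c [] | exact: h].
  have [[i0 oi0]|o0] := exists_nz o; last first.
    exfalso; move/eqP: tT0; apply; apply: pull_inj => i; by rewrite -opull o0.
  apply/fcP; split.
  - by exists o, u; split.
  - apply: (span_dim (J := dgraph) (P := fun G => is_dag G && (dot o (eta G) == u))
                     (Y := fun G => eta G) (z := (cw (whom o u))^T)).
    + by move=> G /andP [dG /eqP oG]; split => //; exact: (eta_PN R).
    + move=> o' u' ho'.
      have hK r : injective r -> dot o' (eta (Hr r)) = u'.
        move=> ri; apply: ho'; rewrite Hr_dag /= hdot dot_Hr // t1 eqxx //.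
      have hI' := Idt_of_const hK.
      have [a [ha hu]] : exists a, (forall S, tau o' S = a * t S) /\ u' = a * u.
        apply: annC => c /CtoP [x [Fx cx]].
        have -> : dot (tau o') c = dot (tau o') (cvec x) by apply: eq_bigr => S _; rewrite cx.
        rewrite -dot_tau //; apply: (faceP _ _ _ x Fx) => G dG oG.
        by apply: ho'; rewrite dG oG eqxx.
      apply: (z_scale (a := a)) => // i.
      rewrite (pull_tau hI') opull -pull_scale /pull /pullp; apply: eq_bigr => S _; exact: ha.
    + have h2 : (#|{: Ups}|.+1 = #|{: option Ups}|)%N := esym (card_option _).
      rewrite kU; apply: (@leq_trans (#|{: Ups}| + 1)); first by rewrite leq_add2l rank_leq_row.
      by rewrite addn1 h2.
  - move=> dP; have o0 := ann_full dP (fun x (h : face_of PN o u x) => h.2).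
    by move: oi0; rewrite o0 eqxx.
Qed.

End Part1b.

Theorem corollary6 (R : realFieldType) (N : finType) (hN : (1 < #|N|)%N) :
  (forall (o : Ups N -> R) (u : R), SE o -> valid (PN R N) o u ->
     (is_facet (PN R N) (face_of (PN R N) o u) <->
      is_facet (CN R N) (face_of (CN R N) (tau o) u) /\
      face_of (CN R N) (tau o) u (one_imset R N))) /\
  (forall F : (Sset N -> R) -> Prop, is_facet (CN R N) F -> F (one_imset R N) ->
     exists (o : Ups N -> R) (u : R), [/\ SE o, valid (PN R N) o u &
        forall c, F c <-> face_of (CN R N) (tau o) u c]) /\
  (forall F : (Sset N -> R) -> Prop, is_facet (CN R N) F -> F (one_imset R N) ->
     ~ F (zero_imset R N)).
Proof.
split; first by move=> o u hse vP; apply: part1.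
split; first by move=> F fF _; apply: part2.
by move=> F fF F1; apply: part3.
Qed.
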